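(* For every $m\in\mathbb{N}$ and every $\boldsymbol{X}=(X_1,\dots,X_m)\in\mathbb{N}^m$, with $\widehat{\boldsymbol{\mu}}_m$ the empirical measure of $\boldsymbol{X}$, $$\frac{1}{2\sqrt2}\Phi_m(\widehat{\boldsymbol{\mu}}_m)\le\hat{\mathfrak{R}}_m(\boldsymbol{X})\le\frac12\Phi_m(\widehat{\boldsymbol{\mu}}_m).$$
   Context: $\widehat{\boldsymbol{\mu}}_m(i)=\frac1m\sum_{t=1}^m\mathbb{I}\{X_t=i\}$. $\Phi_m(\widehat{\boldsymbol{\mu}}_m):=\frac1{\sqrt m}\sum_{j\in\mathbb{N}}\sqrt{\widehat{\boldsymbol{\mu}}_m(j)}$. $\hat{\mathfrak{R}}_m(\boldsymbol{X})=\mathbb{E}_{\boldsymbol{\sigma}}\big[\sup_{f:\mathbb{N}\to\{0,1\}}\frac1m\sum_{t=1}^m\sigma_tf(X_t)\big]$ with $\boldsymbol{\sigma}$ uniform on $\{-1,1\}^m$. *)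

(* Defs.v *)
From HB Require Import structures.
From mathcomp Require Import all_boot all_order all_algebra.
From mathcomp Require Import classical_sets reals.
Set Implicit Arguments. Unset Strict Implicit. Unset Printing Implicit Defensive.
Import Order.TTheory GRing.Theory Num.Theory.
Local Open Scope ring_scope.
Local Open Scope classical_set_scope.

Definition emp_measure (R : realType) (m : nat) (X : 'I_m -> nat) (i : nat) : R :=
  (m%:R)^-1 * (#|[set t : 'I_m | X t == i]|)%:R.

(* Phi_m(mu) = (1/sqrt m) * sum_{j in N} sqrt(mu j).  The summand vanishes for
   j > max_t X_t, so the series over N is the finite sum over j <= max_t X_t. *)
Definition Phi (R : realType) (m : nat) (mu : nat -> R) (N : nat) : R :=
  (Num.sqrt (m%:R))^-1 * \sum_(j < N) Num.sqrt (mu j).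

Definition maxX (m : nat) (X : 'I_m -> nat) : nat := (\max_(t : 'I_m) X t)%N.

Definition rsign (R : realType) (b : bool) : R := if b then 1 else -1.

Definition corr (R : realType) (m : nat) (X : 'I_m -> nat)
  (s : {ffun 'I_m -> bool}) (f : nat -> bool) : R :=
  (m%:R)^-1 * \sum_(t : 'I_m) rsign R (s t) * (f (X t))%:R.

Definition emp_rademacher (R : realType) (m : nat) (X : 'I_m -> nat) : R :=
  ((2%:R : R) ^+ m)^-1 *
  \sum_(s : {ffun 'I_m -> bool}) sup (range (fun f : nat -> bool => corr R X s f)).

Arguments emp_measure R {m} X i.
Arguments emp_rademacher R {m} X.

(* Main.v *)
Require Import Defs.
From HB Require Import structures.
From mathcomp Require Import all_boot all_order all_algebra.
From mathcomp Require Import classical_sets reals.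
From mathcomp Require Import lra ring zify.
Import Order.TTheory GRing.Theory Num.Theory.
Local Open Scope ring_scope.


Fixpoint E {R : realType} (n : nat) (g : int -> R) : R :=
  if n is n'.+1 then (E n' (fun x => g (x + 1)) + E n' (fun x => g (x - 1))) / 2
  else g 0.

Lemma E_Sdef (R : realType) n (g : int -> R) :
  E n.+1 g = (E n (fun x => g (x + 1)) + E n (fun x => g (x - 1))) / 2.
Proof. by []. Qed.

Lemma E_ext (R : realType) n (g h : int -> R) :
  (forall x, g x = h x) -> E n g = E n h.
Proof.
elim: n g h => [|n IH] g h H /=; first exact: H.
rewrite (IH (fun x => g (x + 1)) (fun x => h (x + 1))); last by move=> x; exact: H.
by rewrite (IH (fun x => g (x - 1)) (fun x => h (x - 1))); last by move=> x; exact: H.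
Qed.

Arguments E_ext {R n g} h _.

Lemma E_add (R : realType) n (g h : int -> R) :
  E n (fun x => g x + h x) = E n g + E n h.
Proof.
elim: n g h => [|n IH] g h //=.
rewrite (IH (fun x => g (x + 1))) (IH (fun x => g (x - 1))); lra.
Qed.

Lemma E_scale (R : realType) n (c : R) (g : int -> R) :
  E n (fun x => c * g x) = c * E n g.
Proof.
elim: n g => [|n IH] g //=.
by rewrite (IH (fun x => g (x + 1))) (IH (fun x => g (x - 1))) mulrA mulrDr.
Qed.

Lemma E_const (R : realType) n (c : R) : E n (fun _ => c) = c.
Proof. elim: n => [|n IH] //=; rewrite IH; lra. Qed.

Lemma E_le (R : realType) n (g h : int -> R) :
  (forall x, g x <= h x) -> E n g <= E n h.
Proof.
elim: n g h => [|n IH] g h H /=; first exact: H.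
have := IH _ (fun x => h (x + 1)) (fun x => H _).
have := IH _ (fun x => h (x - 1)) (fun x => H _).
lra.
Qed.

Lemma E_mid (R : realType) n (g h : int -> R) :
  (E n g + E n h) / 2 = E n (fun x => (g x + h x) / 2).
Proof.
rewrite (@E_ext _ _ (fun x => (g x + h x) / 2) (fun x => 2^-1 * (g x + h x))); last by move=> x; rewrite mulrC.
by rewrite E_scale E_add mulrC.
Qed.

Lemma E_sym (R : realType) n (g : int -> R) : E n (fun x => g (- x)) = E n g.
Proof.
elim: n g => [|n IH] g /=; first by rewrite oppr0.
rewrite (@E_ext _ _ (fun x => g (- (x + 1))) (fun x => (fun y => g (y - 1)) (- x))); last by move=> x; rewrite opprD.
rewrite (@E_ext _ _ (fun x => g (- (x - 1))) (fun x => (fun y => g (y + 1)) (- x))); last by move=> x; rewrite opprB addrC.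
rewrite (IH (fun y => g (y - 1))) (IH (fun y => g (y + 1))); lra.
Qed.

Lemma E_jensen (R : realType) n (g : int -> R) : E n g ^+ 2 <= E n (fun x => g x ^+ 2).
Proof.
elim: n g => [|n IH] g /=; first by [].
have := IH (fun x => g (x + 1)); have := IH (fun x => g (x - 1)).
move: (E n (fun x => g (x + 1))) (E n (fun x => g (x - 1))) => a b.
move: (E n _) (E n _) => B A h1 h2.
have := sqr_ge0 (a - b). rewrite !expr2 in h1 h2 *. nra.
Qed.

Lemma E_sq (R : realType) n : E n (fun x : int => (x%:~R : R) ^+ 2) = n%:R.
Proof.
elim: n => [|n IH]; first by rewrite /= expr2 mulr0.
rewrite E_Sdef E_mid (E_ext (fun x => (x%:~R : R) ^+ 2 + 1)).
  by rewrite E_add IH E_const -natr1.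
move=> x; rewrite intrD intrB /=. lra.
Qed.

Lemma E_stein (R : realType) n (f : int -> R) :
  E n.+1 (fun x => (x%:~R : R) * f x) = n.+1%:R * E n (fun x => (f (x + 1) - f (x - 1)) / 2).
Proof.
elim: n f => [|n IH] f.
  rewrite /= !add0r mul1r rmorphN /= rmorph1. lra.
rewrite [LHS]E_Sdef.
rewrite (@E_ext _ _ (fun x => ((x + 1)%:~R : R) * f (x + 1)) (fun x => (x%:~R : R) * f (x + 1) + f (x + 1)));
  last by move=> x; rewrite intrD mulrDl mul1r.
rewrite (@E_ext _ _ (fun x => ((x - 1)%:~R : R) * f (x - 1)) (fun x => (x%:~R : R) * f (x - 1) + (- f (x - 1))));
  last by move=> x; rewrite intrB mulrBl mul1r.
rewrite !E_add (IH (fun y => f (y + 1))) (IH (fun y => f (y - 1))).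
rewrite (@E_ext _ _ (fun x => - f (x - 1)) (fun x => (-1) * f (x - 1))); last by move=> x; rewrite mulN1r.
rewrite E_scale.
set ED := E n.+1 (fun x => (f (x + 1) - f (x - 1)) / 2).
have h1 : ED = (E n.+1 (fun x => f (x + 1)) - E n.+1 (fun x => f (x - 1))) / 2.
  rewrite /ED (@E_ext _ _ (fun x => (f (x + 1) - f (x - 1)) / 2) (fun x => 2^-1 * f (x + 1) + 2^-1 * ((-1) * f (x - 1)))).
    rewrite E_add !E_scale; lra.
  move=> x; lra.
have h2 : ED = (E n (fun x => (f (x + 1 + 1) - f (x - 1 + 1)) / 2)
              + E n (fun x => (f (x + 1 - 1) - f (x - 1 - 1)) / 2)) / 2.
  rewrite /ED E_Sdef E_mid E_mid.
  apply: E_ext => x.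
  rewrite -[x - 1 + 1]addrA -[x + 1 - 1]addrA addNr subrr addr0; lra.
have -> : n.+2%:R = n.+1%:R + 1 :> R by rewrite natr1.
rewrite [RHS]mulrDl [in RHS]mul1r {1}h2 h1.
move: (E n.+1 _) (E n.+1 _) (E n _) (E n _) (n.+1%:R) => P Q U V k.
ring.
Qed.

Definition aa (R : realType) n := E n (fun x : int => (`|x|%:~R : R)).
Definition zz (R : realType) n := E n (fun x : int => ((x == 0)%:R : R)).

Lemma rel1 (R : realType) n : aa R n.+1 = aa R n + zz R n.
Proof.
rewrite /aa /zz E_Sdef E_mid -E_add; apply: E_ext => x.
case: (eqVneq x 0) => [->|hx].
  rewrite add0r sub0r normrN normr1 normr0 /=; lra.
have -> : `|x + 1| = `|x| + (0 < x)%R%:R - (x < 0)%R%:R :> int.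
  case: (ltrgtP x 0) => h; [| |by rewrite h eqxx in hx]; lia.
have -> : `|x - 1| = `|x| - (0 < x)%R%:R + (x < 0)%R%:R :> int.
  case: (ltrgtP x 0) => h; [| |by rewrite h eqxx in hx]; lia.
rewrite !intrD ?intrN /=. lra.
Qed.

Lemma rel2 (R : realType) n : aa R n.+1 = n.+1%:R * (zz R n + zz R n.+1).
Proof.
pose f (x : int) : R := (0 < x)%R%:R - (x < 0)%R%:R.
rewrite /aa (@E_ext _ _ _ (fun x => (x%:~R : R) * f x)); last first.
  move=> x; rewrite /f; case: (ltrgtP x 0) => h.
  - by rewrite ltr0_norm // rmorphN /= sub0r mulrN1.
  - by rewrite gtr0_norm // subr0 mulr1.
  - by rewrite h normr0 subrr mulr0.
rewrite E_stein; congr (_ * _).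
rewrite /zz E_Sdef E_mid -E_add; apply: E_ext => x.
rewrite /f.
case: (eqVneq x 0) => [->|h0].
  rewrite /=; lra.
case: (eqVneq x 1) => [->|h1].
  rewrite /=; lra.
case: (eqVneq x (-1)) => [->|h2].
  rewrite /=; lra.
have -> : (0 < x + 1) = (0 < x) by lia.
have -> : (x + 1 < 0) = (x < 0) by lia.
have -> : (0 < x - 1) = (0 < x) by lia.
have -> : (x - 1 < 0) = (x < 0) by lia.
have -> : (x + 1 == 0) = false by lia.
have -> : (x - 1 == 0) = false by lia.
rewrite /=. lra.
Qed.

Lemma num_key (R : realType) (a z : nat -> R) : a 0 = 0 -> z 0 = 1 ->
  (forall n, a n.+1 = a n + z n) -> (forall n, a n.+1 = n.+1%:R * (z n + z n.+1)) ->
  forall k, a (k.*2.+2) = (k.*2.+2)%:R * z (k.*2.+2) /\ 0 <= z (k.*2.+2)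
            /\ 1 <= 4 * (k.+1)%:R * z (k.*2.+2) ^+ 2.
Proof.
move=> h0 hz0 r1 r2; elim => [|k [ha [hz hq]]].
  have e1 := r1 0%N; have e2 := r2 0%N; have e3 := r1 1%N; have e4 := r2 1%N.
  rewrite h0 hz0 /= in e1 e2 e3 e4 *.
  have hz1 : z 1%N = 0 by lra.
  have hz2 : z 2%N = 1/2 by lra.
  rewrite (_ : 0.*2.+2 = 2)%N // hz2; split; first lra. split; first lra. rewrite expr2; lra.
rewrite doubleS.
set n := k.*2.+2 in ha hz hq *.
have e1 := r1 n; have e2 := r2 n; have e3 := r1 n.+1; have e4 := r2 n.+1.
have eN1 : n.+1%:R = n%:R + 1 :> R by rewrite -natr1.
have eN2 : n.+2%:R = n%:R + 2 :> R by rewrite -!natr1; lra.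
have eN : n%:R = 2 * k%:R + 2 :> R by rewrite /n -!natr1 -muln2 natrM; lra.
have eK : k.+2%:R = k%:R + 2 :> R by rewrite -!natr1; lra.
have eK1 : k.+1%:R = k%:R + 1 :> R by rewrite -!natr1.
rewrite eN1 in e2; rewrite eN2 in e4 *; rewrite eK; rewrite eK1 in hq.
rewrite eN in ha e2 e4 *.
have k0 : 0 <= k%:R :> R by apply: ler0n.
move: (a n) (a n.+1) (a n.+2) (z n) (z n.+1) (z n.+2) (k%:R : R) e1 e2 e3 e4 ha hz hq k0
  => A0 A1 A2 w w1 y K e1 e2 e3 e4 ha hz hq k0.
have hw1 : w1 = 0 by nra.
rewrite hw1 in e3 e4.
have hy : y * (2 * K + 4) = (2 * K + 3) * w by lra.
split; first lra.
have hy' : y = (2 * K + 3) * w / (2 * K + 4) by rewrite -hy; field; lra.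
split.
  rewrite hy'; apply: divr_ge0; [apply: mulr_ge0 => //; lra | lra].
rewrite hy' expr_div_n mulrA ler_pdivlMr; last by rewrite exprn_gt0 //; lra.
rewrite mul1r !expr2 in hq *.
have H1 : K + 2 <= (K + 2) * (4 * (K + 1) * (w * w)) by nra.
have H2 : 0 <= w * w by nra.
nra.
Qed.

Lemma num_main (R : realType) (a z : nat -> R) : a 0 = 0 -> z 0 = 1 ->
  (forall n, a n.+1 = a n + z n) -> (forall n, a n.+1 = n.+1%:R * (z n + z n.+1)) ->
  forall n, n%:R / 2 <= a n ^+ 2.
Proof.
move=> h0 hz0 r1 r2 n.
have key := @num_key R a z h0 hz0 r1 r2.
case: n => [|[|n]].
- by rewrite h0 expr2 mulr0 mul0r.
- by rewrite r1 h0 hz0 add0r expr1n; lra.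
rewrite -[n](odd_double_half n); case: (odd n) => /=; set k := n./2.
- rewrite add1n r1.
  have [ha [hz hq]] := key k.
  rewrite ha.
  have eN : (k.*2.+3)%:R = 2 * k%:R + 3 :> R by rewrite -!natr1 -muln2 natrM; lra.
  have eN2 : (k.*2.+2)%:R = 2 * k%:R + 2 :> R by rewrite -!natr1 -muln2 natrM; lra.
  have eK : (k.+1)%:R = k%:R + 1 :> R by rewrite -natr1.
  rewrite eN eN2; rewrite eK in hq.
  have k0 : 0 <= k%:R :> R by apply: ler0n.
  move: (z _) (k%:R : R) hz hq k0 => w K hz hq k0.
  rewrite !expr2 in hq *.
  have H1 : 1 / 2 <= (2 * K + 3) * (w * w) by nra.
  nra.
- rewrite add0n.
  have [ha [hz hq]] := key k.
  rewrite ha.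
  have eN2 : (k.*2.+2)%:R = 2 * k%:R + 2 :> R by rewrite -!natr1 -muln2 natrM; lra.
  have eK : (k.+1)%:R = k%:R + 1 :> R by rewrite -natr1.
  rewrite eN2; rewrite eK in hq.
  have k0 : 0 <= k%:R :> R by apply: ler0n.
  move: (z _) (k%:R : R) hz hq k0 => w K hz hq k0.
  rewrite !expr2 in hq *.
  nra.
Qed.

Definition rsz (b : bool) : int := if b then 1 else -1.

Definition flip (m : nat) (t0 : 'I_m) (s : {ffun 'I_m -> bool}) : {ffun 'I_m -> bool} :=
  [ffun t => if t == t0 then ~~ s t else s t].

Arguments flip {m}.

Lemma flipK (m : nat) (t0 : 'I_m) : involutive (flip t0).
Proof.
move=> s; apply/ffunP => t; rewrite !ffunE.
by case: (t == t0) => //; rewrite negbK.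
Qed.

Lemma reduce (R : realType) (m : nat) (A : {set 'I_m}) (g : int -> R) :
  \sum_(s : {ffun 'I_m -> bool}) g (\sum_(t in A) rsz (s t)) = (2 ^ m)%:R * E #|A| g.
Proof.
move: {2}#|A| (erefl #|A|) => n.
elim: n A g => [|n IH] A g hA.
  have -> : A = finset.set0 by apply: cards0_eq.
  under eq_bigr do rewrite big_set0.
  by rewrite sumr_const cards0 /= mulr_natl card_ffun card_bool card_ord.
have : (0 < #|A|)%N by rewrite hA.
case/card_gt0P => t0 Ht0.
set B := A :\ t0.
have hB : #|B| = n.
  by move: hA; rewrite (cardsD1 t0 A) Ht0 add1n => -[].
under eq_bigr do rewrite (big_setD1 t0 Ht0) /=.
have SB : forall s, \sum_(t in B) rsz (flip t0 s t) = \sum_(t in B) rsz (s t).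
  move=> s; apply: eq_bigr => t; rewrite /B !inE ffunE => /andP [/negbTE -> _] //.
set L := \sum_(s : {ffun 'I_m -> bool}) _.
have L2 : L = \sum_(s : {ffun 'I_m -> bool}) g (rsz (~~ s t0) + \sum_(t in B) rsz (s t)).
  rewrite /L (reindex_inj (inv_inj (@flipK m t0))) /=.
  apply: eq_bigr => s _; rewrite SB ffunE eqxx //.
have : L + L = \sum_(s : {ffun 'I_m -> bool}) g (\sum_(t in B) rsz (s t) + 1)
             + \sum_(s : {ffun 'I_m -> bool}) g (\sum_(t in B) rsz (s t) - 1).
  rewrite {2}L2 /L -!big_split /=; apply: eq_bigr => s _.
  by case: (s t0); rewrite /= ?[_ + 1]addrC ?[_ - 1]addrC // addrC.
rewrite (IH B (fun x => g (x + 1)) hB) (IH B (fun x => g (x - 1)) hB) hA E_Sdef => H.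
have -> : L = (L + L) / 2 by field.
by rewrite H hB; field.
Qed.
Lemma card_eq (R : realType) (m : nat) (X : 'I_m -> nat) (j : nat) :
  emp_measure R X j = (m%:R)^-1 * (#|[set t : 'I_m | X t == j]|)%:R.
Proof.
rewrite /emp_measure; congr (_ * _%:R).
apply: eq_card => t; rewrite inE.
apply/idP/idP => [/set_mem /= -> // | h]; exact: mem_set.
Qed.

Lemma ltX (m : nat) (X : 'I_m -> nat) (t : 'I_m) : (X t < (maxX X).+1)%N.
Proof. by rewrite ltnS /maxX; apply: (@leq_bigmax _ X t). Qed.

Arguments ltX {m}.

Definition Sj (R : realType) (m : nat) (X : 'I_m -> nat) (s : {ffun 'I_m -> bool}) (j : nat) : R :=
  \sum_(t | X t == j) rsign R (s t).

Arguments Sj R {m}.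

Lemma corr_decomp (R : realType) (m : nat) (X : 'I_m -> nat) s (f : nat -> bool) :
  corr R X s f = (m%:R)^-1 * \sum_(j < (maxX X).+1) (f j)%:R * Sj R X s j.
Proof.
rewrite /corr; congr (_ * _).
rewrite (partition_big (fun t => Ordinal (ltX X t)) xpredT) //=.
apply: eq_bigr => j _.
rewrite /Sj big_distrr /=.
apply: eq_big => t; first by rewrite -val_eqE.
by move=> /eqP <-; rewrite mulrC.
Qed.

Lemma sup_eq (R : realType) (m : nat) (X : 'I_m -> nat) s :
  sup (range (fun f : nat -> bool => corr R X s f))
  = (m%:R)^-1 * \sum_(j < (maxX X).+1) Num.max (Sj R X s j) 0.
Proof.
set M := _ * _.
have ub : forall f, corr R X s f <= M.
  move=> f; rewrite corr_decomp /M; apply: ler_wpM2l; first by rewrite invr_ge0 ler0n.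
  apply: ler_sum => j _; case: (f j) => /=; by rewrite ?mul1r ?mul0r le_max ?lexx ?orbT.
pose f0 := fun j : nat => (0 < Sj R X s j).
have att : corr R X s f0 = M.
  rewrite corr_decomp /M; congr (_ * _); apply: eq_bigr => j _.
  by rewrite /f0; case: ltP => h /=; rewrite ?mul1r ?mul0r.
apply/le_anti/andP; split.
  apply: ge_sup; first by exists (corr R X s f0), f0.
  by move=> y [f _ <-]; exact: ub.
rewrite -att; apply: ub_le_sup; last by exists f0.
by exists M => y [f _ <-]; exact: ub.
Qed.

Lemma Sj_int (R : realType) (m : nat) (X : 'I_m -> nat) s j :
  Sj R X s j = ((\sum_(t in [set t : 'I_m | X t == j]) rsz (s t))%:~R : R).
Proof.
rewrite /Sj rmorph_sum; apply: eq_big => [t|t _]; first by rewrite inE.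
by case: (s t); rewrite /rsign /rsz /= ?rmorphN rmorph1.
Qed.

Lemma max_sum (R : realType) (y : R) : Num.max y 0 + Num.max (- y) 0 = `|y|.
Proof.
case: (lerP 0 y) => h; case: (lerP (- y) 0) => h2.
- by rewrite ger0_norm //; lra.
- lra.
- lra.
- by rewrite ltr0_norm //; lra.
Qed.

Lemma E_pos (R : realType) n : E n (fun x : int => Num.max (x%:~R : R) 0) = aa R n / 2.
Proof.
set g := fun x : int => Num.max (x%:~R : R) 0.
have -> : E n g = (E n g + E n (fun x => g (- x))) / 2 by rewrite E_sym; lra.
rewrite E_mid /aa (@E_ext _ _ _ (fun x : int => 2^-1 * (`|x|%:~R : R))).
  by rewrite E_scale mulrC.
move=> x; rewrite /g rmorphN /= max_sum intr_norm; lra.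
Qed.

Lemma avg_pos (R : realType) (m : nat) (X : 'I_m -> nat) (j : nat) :
  ((2%:R : R) ^+ m)^-1 * \sum_(s : {ffun 'I_m -> bool}) Num.max (Sj R X s j) 0
  = aa R #|[set t : 'I_m | X t == j]| / 2.
Proof.
under eq_bigr do rewrite Sj_int.
rewrite (@reduce R m [set t : 'I_m | X t == j] (fun x : int => Num.max (x%:~R : R) 0)).
rewrite E_pos natrX !mulrA mulVf ?mul1r //.
by rewrite expf_neq0 // pnatr_eq0.
Qed.

Lemma aa_ge0 (R : realType) n : 0 <= aa R n.
Proof.
rewrite -(@E_const R n 0) /aa; apply: E_le => x; by rewrite ler0z normr_ge0.
Qed.

Lemma aa_sq_le (R : realType) n : aa R n ^+ 2 <= n%:R.
Proof.
apply: (le_trans (E_jensen _ _ _)); rewrite -(E_sq R n) le_eqVlt; apply/orP; left; apply/eqP.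
apply: E_ext => x; by rewrite intr_norm real_normK ?num_real.
Qed.

Lemma aa_sq_ge (R : realType) n : n%:R / 2 <= aa R n ^+ 2.
Proof.
apply: (@num_main R (aa R) (zz R)) => //; [exact: rel1 | exact: rel2].
Qed.

Lemma bounds (R : realType) n :
  (2%:R * Num.sqrt 2%:R)^-1 * Num.sqrt n%:R <= aa R n / 2
  /\ aa R n / 2 <= 2%:R^-1 * Num.sqrt (n%:R : R).
Proof.
have a0 := aa_ge0 R n.
have up : aa R n <= Num.sqrt n%:R.
  by rewrite -(ger0_norm a0) -sqrtr_sqr; apply: ler_wsqrtr; exact: aa_sq_le.
have lo : Num.sqrt n%:R * (Num.sqrt 2%:R)^-1 <= aa R n.
  rewrite -sqrtrV ?ler0n // -sqrtrM ?ler0n // -(ger0_norm a0) -sqrtr_sqr.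
  by apply: ler_wsqrtr; exact: aa_sq_ge.
split; last by lra.
rewrite invfM -mulrA [_^-1 * Num.sqrt _]mulrC.
move: lo; set u := _ * _ => lo; lra.
Qed.

Lemma rad_eq (R : realType) (m : nat) (X : 'I_m -> nat) :
  emp_rademacher R X = (m%:R)^-1 *
    \sum_(j < (maxX X).+1) aa R #|[set t : 'I_m | X t == j]| / 2.
Proof.
rewrite /emp_rademacher.
under eq_bigr do rewrite sup_eq.
rewrite -mulr_sumr mulrCA exchange_big /= mulr_sumr; congr (_ * _).
apply: eq_bigr => j _; exact: avg_pos.
Qed.

Lemma phi_eq (R : realType) (m : nat) (hm : (0 < m)%N) (X : 'I_m -> nat) :
  Phi m (emp_measure R X) (maxX X).+1 = (m%:R)^-1 *
    \sum_(j < (maxX X).+1) Num.sqrt (#|[set t : 'I_m | X t == j]|%:R : R).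
Proof.
rewrite /Phi.
under eq_bigr do rewrite card_eq sqrtrM ?invr_ge0 ?ler0n // sqrtrV ?ler0n //.
rewrite -mulr_sumr mulrA -invfM -expr2 sqr_sqrtr ?ler0n //.
Qed.

Theorem lemma2 (R : realType) (m : nat) (hm : (0 < m)%N) (X : 'I_m -> nat) :
  (2%:R * Num.sqrt 2%:R)^-1 * Phi m (emp_measure R X) (maxX X).+1
    <= emp_rademacher R X
  /\ emp_rademacher R X <= 2%:R^-1 * Phi m (emp_measure R X) (maxX X).+1.
Proof.
rewrite rad_eq phi_eq // (mulrCA (2%:R * _)^-1) (mulrCA 2%:R^-1) !mulr_sumr.
have m0 : 0 <= (m%:R : R)^-1 by rewrite invr_ge0 ler0n.
split; apply: ler_sum => j _; apply: ler_wpM2l => //; have [h1 h2] := bounds R #|[set t : 'I_m | X t == j]|.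
- exact: h1.
- exact: h2.
Qed.
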